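(* A map $T:\mathrm{PSym}(3)\to\mathrm{Sym}(3)$ satisfies Axioms (A0.1), (A0.2), (A0.3), (A1), (A2) and (A3) if and only if there exist constants $G,\Lambda\in\mathbb R$ with $G\neq0$ and $3\Lambda+2G\neq0$ such that $$T(U)=2G\,\log U+\Lambda\,\mathrm{tr}(\log U)\,\mathbb 1\qquad\text{for all }U\in\mathrm{PSym}(3),$$ equivalently, constants $G,K\in\mathbb R\setminus\{0\}$ with $T(U)=2G\,\mathrm{dev}_3\log U+K\,\mathrm{tr}(\log U)\,\mathbb 1$ for all $U\in\mathrm{PSym}(3)$ (where $K=\Lambda+\tfrac23 G$).
   Context: $\mathrm{Sym}(3)$: real symmetric $3\times3$ matrices; $\mathrm{PSym}(3)$: symmetric positive definite ones; $\mathbb 1$: identity; $\mathrm{O}(3)$: orthogonal group; $\log:\mathrm{PSym}(3)\to\mathrm{Sym}(3)$ the principal matrix logarithm; $\mathrm{dev}_3X=X-\tfrac13\mathrm{tr}(X)\mathbb 1$; coaxial means commuting. Axiom (A0.1): $T$ continuous. Axiom (A0.2): $T(U)=0$ iff $U=\mathbb 1$. Axiom (A0.3): $T(Q^TUQ)=Q^TT(U)Q$ for all $Q\in\mathrm O(3)$, $U\in\mathrm{PSym}(3)$. Axiom (A1): for every $\alpha>0$ there is $s\in\mathbb R$ such that for all $U\in\mathrm{PSym}(3)$: $U=\mathrm{diag}(\alpha,\alpha^{-1},1)$ iff $T(U)=\mathrm{diag}(s,-s,0)$. Axiom (A2): for every $\lambda>0$ there is $a\in\mathbb R$ such that for all $U\in\mathrm{PSym}(3)$: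 $U=\lambda\mathbb 1$ iff $T(U)=a\mathbb 1$. Axiom (A3): $T(U_1U_2)=T(U_1)+T(U_2)$ for all coaxial $U_1,U_2\in\mathrm{PSym}(3)$. *)

(* Defs.v *)
From Stdlib Require Import Reals ClassicalEpsilon.
Open Scope R_scope.

Inductive I3 : Type := i0 | i1 | i2.

Definition Mat := I3 -> I3 -> R.
Definition Vec := I3 -> R.

Definition sum3 (f : I3 -> R) : R := f i0 + f i1 + f i2.

Definition mmul (A B : Mat) : Mat := fun i j => sum3 (fun k => A i k * B k j).
Definition madd (A B : Mat) : Mat := fun i j => A i j + B i j.
Definition msub (A B : Mat) : Mat := fun i j => A i j - B i j.
Definition mscale (c : R) (A : Mat) : Mat := fun i j => c * A i j.
Definition mtr (A : Mat) : Mat := fun i j => A j i.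
Definition trace (A : Mat) : R := sum3 (fun i => A i i).
Definition I3eqb (i j : I3) : bool :=
  match i, j with i0, i0 | i1, i1 | i2, i2 => true | _, _ => false end.
Definition mid : Mat := fun i j => if I3eqb i j then 1 else 0.
Definition mzero : Mat := fun _ _ => 0.
Definition diag (d : Vec) : Mat := fun i j => if I3eqb i j then d i else 0.
Definition diag3 (a b c : R) : Mat :=
  diag (fun i => match i with i0 => a | i1 => b | i2 => c end).

Definition Sym (A : Mat) : Prop := mtr A = A.
Definition PSym (A : Mat) : Prop :=
  Sym A /\ forall x : Vec, x <> (fun _ => 0) ->
    0 < sum3 (fun i => sum3 (fun j => x i * A i j * x j)).
Definition Orth (Q : Mat) : Prop := mmul (mtr Q) Q = mid.

Definition coaxial (A B : Mat) : Prop := mmul A B = mmul B A.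

Definition dev3 (X : Mat) : Mat := msub X (mscale (trace X / 3) mid).

Definition IsLog (U L : Mat) : Prop :=
  exists (Q : Mat) (d : Vec), Orth Q /\ (forall i, 0 < d i) /\
    U = mmul (mmul Q (diag d)) (mtr Q) /\
    L = mmul (mmul Q (diag (fun i => ln (d i)))) (mtr Q).

Definition matlog (U : Mat) : Mat := epsilon (inhabits mzero) (IsLog U).

Definition mdist (A B : Mat) : R := sum3 (fun i => sum3 (fun j => Rabs (A i j - B i j))).

(* Axioms on T : PSym(3) -> Sym(3) (T is modelled as a total map on Mat,
   whose values outside PSym(3) are irrelevant). *)
Definition A0_1 (T : Mat -> Mat) : Prop :=
  forall U, PSym U -> forall eps, 0 < eps -> exists delta, 0 < delta /\
    forall V, PSym V -> mdist V U < delta -> mdist (T V) (T U) < eps.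
Definition A0_2 (T : Mat -> Mat) : Prop :=
  forall U, PSym U -> (T U = mzero <-> U = mid).
Definition A0_3 (T : Mat -> Mat) : Prop :=
  forall Q U, Orth Q -> PSym U ->
    T (mmul (mmul (mtr Q) U) Q) = mmul (mmul (mtr Q) (T U)) Q.
Definition A1 (T : Mat -> Mat) : Prop :=
  forall alpha, 0 < alpha -> exists s : R, forall U, PSym U ->
    (U = diag3 alpha (/ alpha) 1 <-> T U = diag3 s (- s) 0).
Definition A2 (T : Mat -> Mat) : Prop :=
  forall lam, 0 < lam -> exists a : R, forall U, PSym U ->
    (U = mscale lam mid <-> T U = mscale a mid).
Definition A3 (T : Mat -> Mat) : Prop :=
  forall U1 U2, PSym U1 -> PSym U2 -> coaxial U1 U2 ->
    T (mmul U1 U2) = madd (T U1) (T U2).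

Definition AllAxioms (T : Mat -> Mat) : Prop :=
  A0_1 T /\ A0_2 T /\ A0_3 T /\ A1 T /\ A2 T /\ A3 T.

(* Main.v *)
From Pilot Require Import Defs.
From Stdlib Require Import Reals Lra Psatz FunctionalExtensionality ClassicalEpsilon Classical Ranalysis Nsatz ZArith.
Open Scope R_scope.

Ltac mext := apply functional_extensionality; intro i; apply functional_extensionality; intro j.
Ltac msimp := unfold diag3, mmul, madd, msub, mscale, mtr, trace, mid, mzero, diag, sum3, I3eqb in *.
Ltac mcases := apply functional_extensionality; intros [| |]; apply functional_extensionality; intros [| |].
Ltac mring := mcases; msimp; simpl; ring.

Lemma mmul_assoc A B C : mmul (mmul A B) C = mmul A (mmul B C).
Proof. mring. Qed.
Lemma mtr_mmul A B : mtr (mmul A B) = mmul (mtr B) (mtr A).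
Proof. mring. Qed.
Lemma mtr_mtr A : mtr (mtr A) = A.
Proof. mext; reflexivity. Qed.
Lemma mmul_mid_l A : mmul mid A = A.
Proof. mring. Qed.
Lemma mmul_mid_r A : mmul A mid = A.
Proof. mring. Qed.
Lemma mtr_diag d : mtr (diag d) = diag d.
Proof. mcases; reflexivity. Qed.
Lemma mtr_mid : mtr mid = mid.
Proof. mcases; reflexivity. Qed.
Lemma diag_mul a b : mmul (diag a) (diag b) = diag (fun i => a i * b i).
Proof. mring. Qed.
Lemma mmul_madd_l A B C : mmul (madd A B) C = madd (mmul A C) (mmul B C).
Proof. mring. Qed.
Lemma mmul_madd_r A B C : mmul A (madd B C) = madd (mmul A B) (mmul A C).
Proof. mring. Qed.
Lemma mmul_scale_l c A B : mmul (mscale c A) B = mscale c (mmul A B).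
Proof. mring. Qed.
Lemma mmul_scale_r c A B : mmul A (mscale c B) = mscale c (mmul A B).
Proof. mring. Qed.

Definition det (A : Mat) : R :=
  A i0 i0 * (A i1 i1 * A i2 i2 - A i1 i2 * A i2 i1)
  - A i0 i1 * (A i1 i0 * A i2 i2 - A i1 i2 * A i2 i0)
  + A i0 i2 * (A i1 i0 * A i2 i1 - A i1 i1 * A i2 i0).
Definition adj (A : Mat) : Mat := fun i j =>
  match j, i with
  | i0, i0 => A i1 i1 * A i2 i2 - A i1 i2 * A i2 i1
  | i0, i1 => - (A i1 i0 * A i2 i2 - A i1 i2 * A i2 i0)
  | i0, i2 => A i1 i0 * A i2 i1 - A i1 i1 * A i2 i0
  | i1, i0 => - (A i0 i1 * A i2 i2 - A i0 i2 * A i2 i1)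
  | i1, i1 => A i0 i0 * A i2 i2 - A i0 i2 * A i2 i0
  | i1, i2 => - (A i0 i0 * A i2 i1 - A i0 i1 * A i2 i0)
  | i2, i0 => A i0 i1 * A i1 i2 - A i0 i2 * A i1 i1
  | i2, i1 => - (A i0 i0 * A i1 i2 - A i0 i2 * A i1 i0)
  | i2, i2 => A i0 i0 * A i1 i1 - A i0 i1 * A i1 i0
  end.
Lemma mmul_adj A : mmul A (adj A) = mscale (det A) mid.
Proof. mcases; unfold adj, det; msimp; simpl; ring. Qed.
Lemma det_mul A B : det (mmul A B) = det A * det B.
Proof. unfold det; msimp; ring. Qed.
Lemma det_tr A : det (mtr A) = det A.
Proof. unfold det; msimp; ring. Qed.
Lemma det_mid : det mid = 1.
Proof. unfold det; msimp; simpl; ring. Qed.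

Lemma orth_r Q : Orth Q -> mmul Q (mtr Q) = mid.
Proof.
  unfold Orth; intro H.
  assert (Hd : det Q * det Q = 1).
  { rewrite <- det_mid, <- H, det_mul, det_tr; ring. }
  assert (Hn : det Q <> 0) by (intro E; rewrite E in Hd; lra).
  assert (E : mtr Q = mscale (/ det Q) (adj Q)).
  { rewrite <- (mmul_mid_r (mtr Q)).
    replace mid with (mscale (/ det Q) (mmul Q (adj Q))).
    2:{ rewrite mmul_adj. mext; msimp; field; auto. }
    rewrite mmul_scale_r, <- mmul_assoc, H, mmul_mid_l; reflexivity. }
  rewrite E, mmul_scale_r, mmul_adj. mext; msimp. field_simplify; auto. 
Qed.

Lemma orth_tr Q : Orth Q -> Orth (mtr Q).
Proof. intro H; unfold Orth; rewrite mtr_mtr; apply orth_r; auto. Qed.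

Lemma orth_mul P Q : Orth P -> Orth Q -> Orth (mmul P Q).
Proof.
  unfold Orth; intros HP HQ. rewrite mtr_mmul, mmul_assoc, <- (mmul_assoc (mtr P)), HP, mmul_mid_l; auto.
Qed.

Lemma orth_mid : Orth mid.
Proof. unfold Orth; rewrite mtr_mid, mmul_mid_l; auto. Qed.

Definition mv (A : Mat) (v : Vec) : Vec := fun i => sum3 (fun k => A i k * v k).
Definition vscale (c : R) (v : Vec) : Vec := fun i => c * v i.
Definition col (Q : Mat) (k : I3) : Vec := fun i => Q i k.
Ltac vext := apply functional_extensionality; intro i.
Ltac vcases := apply functional_extensionality; intros [| |].

Lemma mv_mmul A B v : mv (mmul A B) v = mv A (mv B v).
Proof. vcases; unfold mv; msimp; ring. Qed.
Lemma mv_mid v : mv mid v = v.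
Proof. vcases; unfold mv; msimp; simpl; ring. Qed.
Lemma mv_diag d v : mv (diag d) v = fun i => d i * v i.
Proof. vcases; unfold mv; msimp; simpl; ring. Qed.
Lemma mv_vscale A c v : mv A (vscale c v) = vscale c (mv A v).
Proof. vcases; unfold mv, vscale; msimp; ring. Qed.

Lemma mat_eq_cols A B : (forall k, mv A (col mid k) = mv B (col mid k)) -> A = B.
Proof.
  intro H. mext.
  assert (E := equal_f (H j) i). unfold mv, col in E; msimp; destruct i, j; simpl in E; lra.
Qed.

Lemma mv_col A B k : mv A (col B k) = col (mmul A B) k.
Proof. vext; unfold mv, col; msimp; reflexivity. Qed.

Lemma cols_eq_orth A B P : Orth P -> (forall k, mv A (col P k) = mv B (col P k)) -> A = B.
Proof.
  intros HP H.
  assert (E : mmul A P = mmul B P).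
  { mext. assert (E := equal_f (H j) i). rewrite !mv_col in E. exact E. }
  rewrite <- (mmul_mid_r A), <- (mmul_mid_r B), <- (orth_r P HP), <- !mmul_assoc, E; auto.
Qed.

Definition conj (Q : Mat) (d : Vec) : Mat := mmul (mmul Q (diag d)) (mtr Q).

Lemma eig_gen Q a b v mu c : Orth Q -> (forall j, a j = mu -> b j = c) ->
  mv (conj Q a) v = vscale mu v -> mv (conj Q b) v = vscale c v.
Proof.
  intros HQ Hab H. unfold conj in *.
  set (w := mv (mtr Q) v).
  assert (Hw : forall j, a j * w j = mu * w j).
  { intro j. assert (E := f_equal (mv (mtr Q)) H).
    rewrite !mv_mmul, <- (mv_mmul (mtr Q) Q), HQ, mv_mid, mv_diag, mv_vscale in E.
    exact (equal_f E j). }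
  rewrite !mv_mmul. fold w.
  assert (E2 : mv (diag b) w = vscale c w).
  { rewrite mv_diag. vext. unfold vscale. destruct (Req_dec (w i) 0) as [Z|Z].
    - rewrite Z; ring.
    - rewrite (Hab i); auto. specialize (Hw i). apply (Rmult_eq_reg_r (w i)); auto. }
  rewrite E2, mv_vscale. unfold w. rewrite <- mv_mmul, orth_r, mv_mid; auto.
Qed.

Lemma conj_col Q d k : Orth Q -> mv (conj Q d) (col Q k) = vscale (d k) (col Q k).
Proof.
  intro HQ. unfold conj. rewrite !mv_mmul.
  assert (E : mv (mtr Q) (col Q k) = col mid k).
  { rewrite mv_col, HQ. reflexivity. }
  rewrite E, mv_diag. vext. unfold mv, vscale, col, sum3, mid.
  destruct i, k; simpl; ring.
Qed.

Lemma conj_unique Q a b P e f F : Orth Q -> Orth P ->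
  conj Q a = conj P e -> (forall j, b j = F (a j)) -> (forall j, f j = F (e j)) ->
  conj Q b = conj P f.
Proof.
  intros HQ HP E Hb Hf.
  apply (cols_eq_orth _ _ P HP). intro k.
  rewrite conj_col by auto.
  apply (eig_gen Q a b _ (e k)); auto.
  - intros j Hj. rewrite Hb, Hf, Hj; auto.
  - rewrite E. apply conj_col; auto.
Qed.

Lemma IsLog_unique U L L' : IsLog U L -> IsLog U L' -> L = L'.
Proof.
  intros (Q & d & HQ & Hd & HU & HL) (P & e & HP & He & HU' & HL').
  subst. fold (conj Q (fun i => ln (d i))). fold (conj P (fun i => ln (e i))).
  apply conj_unique with (a := d) (e := e) (F := ln); auto;
  try (unfold conj; congruence).
Qed.

Lemma IsLog_determines U U' L : IsLog U L -> IsLog U' L -> U = U'.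
Proof.
  intros (Q & d & HQ & Hd & HU & HL) (P & e & HP & He & HU' & HL').
  subst. fold (conj Q d). fold (conj P e).
  fold (conj Q (fun i => ln (d i))) in HL'. fold (conj P (fun i => ln (e i))) in HL'.
  apply (conj_unique Q (fun i => ln (d i)) d P (fun i => ln (e i)) e exp HQ HP HL').
  - intro j; rewrite exp_ln; auto.
  - intro j; rewrite exp_ln; auto.
Qed.

Lemma matlog_spec U L : IsLog U L -> matlog U = L.
Proof.
  intro H. unfold matlog.
  apply (IsLog_unique U); auto.
  apply epsilon_spec. exists L; auto.
Qed.

Lemma IsLog_conj Q d : Orth Q -> (forall i, 0 < d i) -> IsLog (conj Q d) (conj Q (fun i => ln (d i))).
Proof. intros; exists Q, d; unfold conj; auto. Qed.

Lemma trace_conj Q d : Orth Q -> trace (conj Q d) = sum3 d.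
Proof.
  intro HQ. unfold conj.
  assert (E : forall A B, trace (mmul A B) = trace (mmul B A)) by (intros; unfold trace; msimp; ring).
  rewrite E, <- mmul_assoc, HQ, mmul_mid_l. unfold trace, diag, sum3; simpl; ring.
Qed.

Lemma cubic_pos x a b c : 1 <= x -> Rabs a + Rabs b + Rabs c + 1 = x -> 0 < x*x*x - a*x*x + b*x - c.
Proof.
intros.
assert (a <= Rabs a) by apply Rle_abs.
assert (-b <= Rabs b) by (rewrite <- Rabs_Ropp; apply Rle_abs).
assert (c <= Rabs c) by apply Rle_abs.
assert (0 <= Rabs b) by apply Rabs_pos.
assert (0 <= Rabs c) by apply Rabs_pos.
assert (a*(x*x) <= Rabs a*(x*x)) by (apply Rmult_le_compat_r; nra).
assert (-b*x <= Rabs b*x) by (apply Rmult_le_compat_r; lra).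
assert (Rabs b * x <= Rabs b*(x*x)) by (apply Rmult_le_compat_l; nra).
assert (Rabs c <= Rabs c*(x*x)) by (rewrite <- (Rmult_1_r (Rabs c)) at 1; apply Rmult_le_compat_l; nra).
nra.
Qed.

Lemma cubic_root a b c : exists t, t*t*t - a*t*t + b*t - c = 0.
Proof.
  set (M := Rabs a + Rabs b + Rabs c + 1).
  assert (H1 : 1 <= M) by (unfold M; pose proof (Rabs_pos a); pose proof (Rabs_pos b); pose proof (Rabs_pos c); lra).
  assert (Hp := cubic_pos M a b c H1 eq_refl).
  assert (Hn := cubic_pos M (-a) b (-c) H1).
  rewrite !Rabs_Ropp in Hn. specialize (Hn eq_refl).
  destruct (IVT (fun t => t*t*t - a*t*t + b*t - c) (-M) M) as [t [_ Ht]].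
  - reg.
  - lra.
  - simpl. nra.
  - simpl. lra.
  - exists t; exact Ht.
Qed.

Definition nsq (v : Vec) := v i0 * v i0 + v i1 * v i1 + v i2 * v i2.

Lemma nsq_zero v : nsq v = 0 -> v i0 = 0 /\ v i1 = 0 /\ v i2 = 0.
Proof. unfold nsq; intro; repeat split; nra. Qed.

Lemma kernel_vec (M : Mat) : Sym M -> det M = 0 -> exists v, 0 < nsq v /\ mv M v = (fun _ => 0).
Proof.
  intros HS Hd.
  assert (Hs : forall i j, M j i = M i j) by (intros i j; exact (equal_f (equal_f HS i) j)).
  assert (HMA : forall k, mv M (col (adj M) k) = (fun _ => 0)).
  { intro k. rewrite mv_col, mmul_adj, Hd. vext. unfold col, mscale; ring. }
  assert (Hnn : forall v, 0 <= nsq v) by (intro; unfold nsq; nra).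
  destruct (Req_dec (nsq (col (adj M) i0)) 0) as [Z0|Z0].
  2:{ exists (col (adj M) i0); split; auto. destruct (Hnn (col (adj M) i0)); auto; congruence. }
  destruct (Req_dec (nsq (col (adj M) i1)) 0) as [Z1|Z1].
  2:{ exists (col (adj M) i1); split; auto. destruct (Hnn (col (adj M) i1)); auto; congruence. }
  destruct (Req_dec (nsq (col (adj M) i2)) 0) as [Z2|Z2].
  2:{ exists (col (adj M) i2); split; auto. destruct (Hnn (col (adj M) i2)); auto; congruence. }
  apply nsq_zero in Z0, Z1, Z2. unfold col, adj in Z0, Z1, Z2.
  destruct Z0 as (Z00 & Z01 & Z02); destruct Z1 as (Z10 & Z11 & Z12); destruct Z2 as (Z20 & Z21 & Z22).
  rewrite ?(Hs i1 i0) in *; rewrite ?(Hs i2 i0) in *; rewrite ?(Hs i2 i1) in *.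
  destruct (Req_dec (M i0 i0) 0) as [E0|E0].
  2:{ exists (fun i => match i with i0 => M i0 i1 | i1 => - M i0 i0 | i2 => 0 end).
      split. - unfold nsq; nra.
      - vcases; unfold mv, sum3; rewrite ?(Hs i1 i0), ?(Hs i2 i0), ?(Hs i2 i1); nra. }
  destruct (Req_dec (M i1 i1) 0) as [E1|E1].
  2:{ exists (fun i => match i with i0 => 0 | i1 => M i1 i2 | i2 => - M i1 i1 end).
      split. - unfold nsq; nra.
      - vcases; unfold mv, sum3; rewrite ?(Hs i1 i0), ?(Hs i2 i0), ?(Hs i2 i1); nra. }
  destruct (Req_dec (M i2 i2) 0) as [E2|E2].
  2:{ exists (fun i => match i with i0 => M i2 i2 | i1 => 0 | i2 => - M i2 i0 end).
      split. - unfold nsq; nra.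
      - vcases; unfold mv, sum3; rewrite ?(Hs i1 i0), ?(Hs i2 i0), ?(Hs i2 i1); nra. }
  exists (fun i => match i with i0 => 1 | _ => 0 end). split. - unfold nsq; lra.
  - vcases; unfold mv, sum3; rewrite ?(Hs i1 i0), ?(Hs i2 i0), ?(Hs i2 i1); nra.
Qed.

Lemma eigen_exists A : Sym A -> exists lam u, nsq u = 1 /\ mv A u = vscale lam u.
Proof.
  intro HS.
  destruct (cubic_root (trace A)
     (A i0 i0 * A i1 i1 - A i0 i1 * A i1 i0 + A i0 i0 * A i2 i2 - A i0 i2 * A i2 i0
      + A i1 i1 * A i2 i2 - A i1 i2 * A i2 i1) (det A)) as [t Ht].
  set (M := msub A (mscale t mid)).
  assert (HdM : det M = 0).
  { match type of Ht with ?X = 0 => assert (E : det M = - X) by (unfold M, det; msimp; simpl; ring) end.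
    rewrite E, Ht; ring. }
  assert (HSM : Sym M).
  { assert (Hs : forall i j, A j i = A i j) by (intros i j; exact (equal_f (equal_f HS i) j)).
    unfold M, Sym. mcases; msimp; simpl; first [ring | rewrite Hs; ring]. }
  destruct (kernel_vec M HSM HdM) as [v [Hv Hk]].
  set (n := sqrt (nsq v)).
  assert (Hn : 0 < n) by (apply sqrt_lt_R0; auto).
  assert (Hnn : n * n = nsq v) by (apply sqrt_sqrt; lra).
  exists t, (vscale (/ n) v). split.
  - transitivity (nsq v / (n * n)).
    + unfold nsq, vscale. field. lra.
    + rewrite Hnn. field. lra.
  - rewrite mv_vscale.
    assert (E : mv A v = vscale t v).
    { vext. assert (E := equal_f Hk i). unfold M, mv, vscale in *; msimp.
      destruct i; simpl in *; lra. }
    rewrite E. vext; unfold vscale; ring.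
Qed.

(* Householder completion *)
Lemma complete_basis u : nsq u = 1 -> exists Q, Orth Q /\ col Q i0 = u.
Proof.
  intro Hu. unfold nsq in Hu.
  set (a := u i0) in *; set (b := u i1) in *; set (c := u i2) in *.
  destruct (Req_dec a 1) as [Ea|Ea].
  - exists mid. split; [apply orth_mid|].
    assert (b = 0) by nra. assert (c = 0) by nra.
    vcases; unfold col, mid; simpl; unfold a, b, c in *; lra.
  - set (k := / (1 - a)). assert (Hk : k * (1 - a) = 1) by (unfold k; field; lra).
    exists (fun i j => match i, j with
       | i0, i0 => a | i0, i1 => b | i0, i2 => c
       | i1, i0 => b | i1, i1 => 1 - b*b*k | i1, i2 => - (b*c*k)
       | i2, i0 => c | i2, i1 => - (b*c*k) | i2, i2 => 1 - c*c*k end).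
    split.
    + clearbody a b c k. unfold Orth. mcases; msimp; simpl; nsatz.
    + vcases; unfold col; reflexivity.
Qed.

Lemma rot_exists p q r : exists c s, c*c + s*s = 1 /\ (r - p)*c*s + q*(c*c - s*s) = 0.
Proof.
  destruct (Req_dec q 0) as [Hq|Hq].
  - exists 1, 0. subst; split; ring.
  - set (S := sqrt ((p-r)*(p-r) + 4*q*q)).
    assert (HS : S * S = (p-r)*(p-r) + 4*q*q) by (unfold S; apply sqrt_sqrt; pose proof (Rle_0_sqr (p-r)); pose proof (Rle_0_sqr q); unfold Rsqr in *; nra).
    set (mu := (p + r + S) / 2).
    set (n := sqrt (q*q + (mu-p)*(mu-p))).
    assert (Hq2 : 0 < q*q) by (apply (Rsqr_pos_lt q Hq)).
    assert (Hpos : 0 < q*q + (mu-p)*(mu-p)) by (pose proof (Rle_0_sqr (mu-p)); unfold Rsqr in *; nra).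
    assert (Hn : n * n = q*q + (mu-p)*(mu-p)) by (unfold S; apply sqrt_sqrt; pose proof (Rle_0_sqr (p-r)); pose proof (Rle_0_sqr q); unfold Rsqr in *; nra).
    assert (Hn0 : 0 < n) by (unfold n; apply sqrt_lt_R0; auto).
    set (ni := / n). assert (Hni : ni * n = 1) by (unfold ni; field; lra).
    assert (Hmu : 2 * mu = p + r + S) by (unfold mu; field).
    exists (q * ni), ((mu - p) * ni).
    clearbody S mu n ni. clear Hq Hq2 Hpos Hn0. split; nsatz.
Qed.

Lemma diag_self M : M i0 i1 = 0 -> M i0 i2 = 0 -> M i1 i0 = 0 -> M i1 i2 = 0 -> M i2 i0 = 0 -> M i2 i1 = 0 ->
  M = diag (fun i => M i i).
Proof. intros. mcases; unfold diag, I3eqb; simpl; auto. Qed.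

Lemma conj_of_diag Q A d : Orth Q -> mmul (mmul (mtr Q) A) Q = diag d -> A = conj Q d.
Proof.
  intros HQ H. unfold conj. rewrite <- H.
  rewrite !mmul_assoc, orth_r, mmul_mid_r, <- !mmul_assoc, orth_r, mmul_mid_l; auto.
Qed.

Definition rot12 c s : Mat := fun i j => match i, j with
  | i0, i0 => 1 | i1, i1 => c | i1, i2 => - s | i2, i1 => s | i2, i2 => c | _, _ => 0 end.

Lemma rot12_orth c s : c*c + s*s = 1 -> Orth (rot12 c s).
Proof. intro H. unfold Orth, rot12. mcases; msimp; simpl; nsatz. Qed.

Lemma rot12_diag (B : Mat) c s (H10 : B i1 i0 = 0) (H20 : B i2 i0 = 0) (H01 : B i0 i1 = 0) (H02 : B i0 i2 = 0) (H21 : B i2 i1 = B i1 i2) (Hcs : c*c + s*s = 1) (Hr : (B i2 i2 - B i1 i1)*c*s + B i1 i2*(c*c - s*s) = 0) :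
  let M := mmul (mmul (mtr (rot12 c s)) B) (rot12 c s) in M = diag (fun i => M i i).
Proof.
  intros M. apply diag_self; unfold M, rot12; msimp; simpl; nsatz.
Qed.

Lemma spectral A : Sym A -> exists Q d, Orth Q /\ A = conj Q d.
Proof.
  intro HS.
  destruct (eigen_exists A HS) as [lam [u [Hu Hev]]].
  destruct (complete_basis u Hu) as [Q1 [HQ1 Hc]].
  set (B := mmul (mmul (mtr Q1) A) Q1).
  assert (HB0 : col B i0 = vscale lam (col mid i0)).
  { unfold B. rewrite <- (mv_col (mmul (mtr Q1) A) Q1 i0), mv_mmul, Hc, Hev, mv_vscale, <- Hc, mv_col, HQ1.
    reflexivity. }
  assert (HBs : mtr B = B).
  { unfold B. rewrite !mtr_mmul, mtr_mtr, HS, mmul_assoc. reflexivity. }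
  assert (E10 := equal_f HB0 i1). assert (E20 := equal_f HB0 i2).
  assert (E01 := equal_f (equal_f HBs i1) i0). assert (E02 := equal_f (equal_f HBs i2) i0).
  assert (E21 := equal_f (equal_f HBs i1) i2).
  unfold col, vscale, mtr, mid in E10, E20, E01, E02, E21; simpl in E10, E20, E01, E02, E21.
  destruct (rot_exists (B i1 i1) (B i1 i2) (B i2 i2)) as [c [s [Hcs Hrot]]].
  exists (mmul Q1 (rot12 c s)), (fun i => (mmul (mmul (mtr (rot12 c s)) B) (rot12 c s)) i i).
  split.
  - apply orth_mul; auto. apply rot12_orth; auto.
  - apply conj_of_diag. + apply orth_mul; auto. apply rot12_orth; auto.
    + rewrite mtr_mmul. 
      replace (mmul (mmul (mmul (mtr (rot12 c s)) (mtr Q1)) A) (mmul Q1 (rot12 c s)))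
        with (mmul (mmul (mtr (rot12 c s)) B) (rot12 c s)) by (unfold B; rewrite !mmul_assoc; reflexivity).
      clearbody B. apply rot12_diag; auto; lra.
Qed.

Lemma conj_conj Q d : Orth Q -> mmul (mmul (mtr Q) (conj Q d)) Q = diag d.
Proof.
  intro HQ. unfold conj. rewrite !mmul_assoc, HQ, mmul_mid_r, <- mmul_assoc, HQ, mmul_mid_l; auto.
Qed.

Lemma quad_form U Q k : sum3 (fun i => sum3 (fun j => col Q k i * U i j * col Q k j)) =
  mmul (mmul (mtr Q) U) Q k k.
Proof. unfold col; msimp; ring. Qed.

Lemma nonzero_vec (x : Vec) : x <> (fun _ => 0) -> 0 < nsq x.
Proof.
  intro H. unfold nsq.
  destruct (Req_dec (x i0 * x i0 + x i1 * x i1 + x i2 * x i2) 0) as [Z|Z].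
  - exfalso; apply H. apply nsq_zero in Z. destruct Z as (Z0 & Z1 & Z2).
    vcases; auto.
  - pose proof (Rle_0_sqr (x i0)); pose proof (Rle_0_sqr (x i1)); pose proof (Rle_0_sqr (x i2)).
    unfold Rsqr in *. lra.
Qed.

Lemma posdef_eig U Q d : PSym U -> Orth Q -> U = conj Q d -> forall k, 0 < d k.
Proof.
  intros [HS HP] HQ HU k.
  assert (Hx : col Q k <> (fun _ => 0)).
  { intro E. assert (E2 := equal_f (equal_f HQ k) k).
    unfold mmul, mtr, mid, sum3 in E2.
    assert (F := equal_f E). unfold col in F. rewrite !F in E2. destruct k; simpl in E2; lra. }
  specialize (HP _ Hx). rewrite quad_form, HU, conj_conj in HP; auto.
  unfold diag in HP. destruct k; simpl in HP; auto.
Qed.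

Lemma psym_log U : PSym U -> exists Q d, Orth Q /\ (forall i, 0 < d i) /\ U = conj Q d /\
  matlog U = conj Q (fun i => ln (d i)).
Proof.
  intro HP. destruct (spectral U (proj1 HP)) as [Q [d [HQ HU]]].
  assert (Hd := posdef_eig U Q d HP HQ HU).
  exists Q, d. repeat split; auto.
  apply matlog_spec. rewrite HU. apply IsLog_conj; auto.
Qed.

Definition rot01 c s : Mat := fun i j => match i, j with
  | i2, i2 => 1 | i0, i0 => c | i0, i1 => - s | i1, i0 => s | i1, i1 => c | _, _ => 0 end.
Definition rot02 c s : Mat := fun i j => match i, j with
  | i1, i1 => 1 | i0, i0 => c | i0, i2 => - s | i2, i0 => s | i2, i2 => c | _, _ => 0 end.

Lemma rot01_orth c s : c*c + s*s = 1 -> Orth (rot01 c s).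
Proof. intro H. unfold Orth, rot01. mcases; msimp; simpl; nsatz. Qed.
Lemma rot02_orth c s : c*c + s*s = 1 -> Orth (rot02 c s).
Proof. intro H. unfold Orth, rot02. mcases; msimp; simpl; nsatz. Qed.

Lemma rot01_diag (B : Mat) c s (H12 : B i1 i2 = 0) (H20 : B i2 i0 = 0) (H21 : B i2 i1 = 0) (H02 : B i0 i2 = 0) (H10 : B i1 i0 = B i0 i1) (Hcs : c*c + s*s = 1) (Hr : (B i1 i1 - B i0 i0)*c*s + B i0 i1*(c*c - s*s) = 0) :
  let M := mmul (mmul (mtr (rot01 c s)) B) (rot01 c s) in M = diag (fun i => M i i).
Proof. intros M. apply diag_self; unfold M, rot01; msimp; simpl; nsatz. Qed.
Lemma rot02_diag (B : Mat) c s (H12 : B i1 i2 = 0) (H10 : B i1 i0 = 0) (H21 : B i2 i1 = 0) (H01 : B i0 i1 = 0) (H20 : B i2 i0 = B i0 i2) (Hcs : c*c + s*s = 1) (Hr : (B i2 i2 - B i0 i0)*c*s + B i0 i2*(c*c - s*s) = 0) :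
  let M := mmul (mmul (mtr (rot02 c s)) B) (rot02 c s) in M = diag (fun i => M i i).
Proof. intros M. apply diag_self; unfold M, rot02; msimp; simpl; nsatz. Qed.

Lemma simul_diag (d : Vec) (B : Mat) : Sym B -> mmul (diag d) B = mmul B (diag d) ->
  exists R a b, Orth R /\ diag d = conj R a /\ B = conj R b.
Proof.
  intros HS HC.
  assert (Hs : forall i j, B j i = B i j) by (intros i j; exact (equal_f (equal_f HS i) j)).
  assert (Hc : forall i j, d i * B i j = B i j * d j).
  { intros i j. assert (E := equal_f (equal_f HC i) j). unfold mmul, diag, sum3 in E.
    destruct i, j; simpl in E; lra. }
  assert (Z : forall i j, d i <> d j -> B i j = 0).
  { intros i j H. specialize (Hc i j). apply (Rmult_eq_reg_r (d i - d j)); [|lra]. nra. }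
  destruct (Req_dec (d i0) (d i1)) as [E01|E01];
  destruct (Req_dec (d i0) (d i2)) as [E02|E02];
  destruct (Req_dec (d i1) (d i2)) as [E12|E12]; try (exfalso; lra).
  - (* all equal *)
    destruct (spectral B HS) as [R [b [HR HB]]].
    exists R, (fun _ => d i0), b. repeat split; auto.
    unfold conj. replace (diag (fun _ => d i0)) with (mscale (d i0) mid) by (mcases; msimp; simpl; ring).
    rewrite mmul_scale_r, mmul_mid_r, mmul_scale_l, orth_r; auto.
    mcases; msimp; simpl; lra.
  - (* d0 = d1 <> d2 *)
    destruct (rot_exists (B i0 i0) (B i0 i1) (B i1 i1)) as [c [s [Hcs Hr]]].
    assert (HR := rot01_orth c s Hcs).
    exists (rot01 c s). eexists. eexists. split; [exact HR|]. split; apply conj_of_diag; auto.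
    + apply rot01_diag; auto; unfold diag; simpl; try ring; try (rewrite E01; ring); try (rewrite E02; ring); try (rewrite E12; ring).
    + apply rot01_diag; auto; try apply Z; auto; lra.
  - (* d0 = d2 <> d1 *)
    destruct (rot_exists (B i0 i0) (B i0 i2) (B i2 i2)) as [c [s [Hcs Hr]]].
    assert (HR := rot02_orth c s Hcs).
    exists (rot02 c s). eexists. eexists. split; [exact HR|]. split; apply conj_of_diag; auto.
    + apply rot02_diag; auto; unfold diag; simpl; try ring; try (rewrite E01; ring); try (rewrite E02; ring); try (rewrite E12; ring).
    + apply rot02_diag; auto; try apply Z; auto; lra.
  - (* d1 = d2 <> d0 *)
    destruct (rot_exists (B i1 i1) (B i1 i2) (B i2 i2)) as [c [s [Hcs Hr]]].
    assert (HR := rot12_orth c s Hcs).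
    exists (rot12 c s). eexists. eexists. split; [exact HR|]. split; apply conj_of_diag; auto.
    + apply rot12_diag; auto; unfold diag; simpl; try ring; try (rewrite E12; ring).
    + apply rot12_diag; auto; try apply Z; auto; lra.
  - (* distinct *)
    exists mid, d, (fun i => B i i). split; [apply orth_mid|]. split; apply conj_of_diag; try apply orth_mid;
    rewrite mtr_mid, mmul_mid_l, mmul_mid_r; auto.
    apply diag_self; apply Z; auto.
Qed.

Lemma simul U1 U2 : Sym U1 -> Sym U2 -> mmul U1 U2 = mmul U2 U1 ->
  exists P a b, Orth P /\ U1 = conj P a /\ U2 = conj P b.
Proof.
  intros H1 H2 HC.
  destruct (spectral U1 H1) as [Q [d [HQ HU1]]].
  set (B := mmul (mmul (mtr Q) U2) Q).
  assert (HB : Sym B). { unfold Sym, B. rewrite !mtr_mmul, mtr_mtr, H2, mmul_assoc; auto. }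
  assert (HD : diag d = mmul (mmul (mtr Q) U1) Q) by (rewrite HU1, conj_conj; auto).
  assert (HBC : mmul (diag d) B = mmul B (diag d)).
  { rewrite HD. unfold B.
    replace (mmul (mmul (mmul (mtr Q) U1) Q) (mmul (mmul (mtr Q) U2) Q))
      with (mmul (mmul (mtr Q) (mmul U1 (mmul (mmul Q (mtr Q)) U2))) Q) by (rewrite !mmul_assoc; auto).
    replace (mmul (mmul (mmul (mtr Q) U2) Q) (mmul (mmul (mtr Q) U1) Q))
      with (mmul (mmul (mtr Q) (mmul U2 (mmul (mmul Q (mtr Q)) U1))) Q) by (rewrite !mmul_assoc; auto).
    rewrite orth_r, !mmul_mid_l, HC; auto. }
  destruct (simul_diag d B HB HBC) as [R [a [b [HR [Ea Eb]]]]].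
  exists (mmul Q R), a, b. split; [apply orth_mul; auto|].
  assert (E2 : U2 = mmul (mmul Q B) (mtr Q)).
  { unfold B. rewrite !mmul_assoc, orth_r, mmul_mid_r, <- mmul_assoc, orth_r, mmul_mid_l; auto. }
  split.
  - rewrite HU1. unfold conj at 1. rewrite Ea. unfold conj. rewrite mtr_mmul, !mmul_assoc; auto.
  - rewrite E2, Eb. unfold conj. rewrite mtr_mmul, !mmul_assoc; auto.
Qed.

Definition Fm (G Lam : R) (L : Mat) : Mat := madd (mscale (2 * G) L) (mscale (Lam * trace L) mid).

Lemma quad_conj P e x : sum3 (fun i => sum3 (fun j => x i * conj P e i j * x j)) =
  sum3 (fun k => e k * (mv (mtr P) x k * mv (mtr P) x k)).
Proof. unfold conj, mv; msimp; ring. Qed.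

Lemma sum_pos3 e y : (forall i, 0 < e i) -> 0 < nsq y -> 0 < sum3 (fun k => e k * (y k * y k)).
Proof.
  intros He Hy. unfold sum3, nsq in *.
  pose proof (He i0); pose proof (He i1); pose proof (He i2).
  assert (0 <= e i0 * (y i0 * y i0)) by (apply Rmult_le_pos; [lra| apply Rle_0_sqr]).
  assert (0 <= e i1 * (y i1 * y i1)) by (apply Rmult_le_pos; [lra| apply Rle_0_sqr]).
  assert (0 <= e i2 * (y i2 * y i2)) by (apply Rmult_le_pos; [lra| apply Rle_0_sqr]).
  destruct (Req_dec (y i0) 0) as [Z0|Z0].
  2:{ assert (0 < y i0 * y i0) by (apply (Rsqr_pos_lt _ Z0)). assert (0 < e i0 * (y i0 * y i0)) by (apply Rmult_lt_0_compat; lra). lra. }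
  destruct (Req_dec (y i1) 0) as [Z1|Z1].
  2:{ assert (0 < y i1 * y i1) by (apply (Rsqr_pos_lt _ Z1)). assert (0 < e i1 * (y i1 * y i1)) by (apply Rmult_lt_0_compat; lra). lra. }
  destruct (Req_dec (y i2) 0) as [Z2|Z2].
  2:{ assert (0 < y i2 * y i2) by (apply (Rsqr_pos_lt _ Z2)). assert (0 < e i2 * (y i2 * y i2)) by (apply Rmult_lt_0_compat; lra). lra. }
  rewrite Z0, Z1, Z2 in Hy. lra.
Qed.

Lemma conj_sym P e : Sym (conj P e).
Proof. unfold Sym, conj. rewrite !mtr_mmul, mtr_mtr, mtr_diag, mmul_assoc; auto. Qed.

Lemma psym_conj P e : Orth P -> (forall i, 0 < e i) -> PSym (conj P e).
Proof.
  intros HP He. split; [apply conj_sym|].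
  intros x Hx. rewrite quad_conj. apply sum_pos3; auto.
  apply nonzero_vec. intro E. apply Hx.
  rewrite <- (mv_mid x), <- (orth_r P HP), mv_mmul, E. vext; unfold mv, sum3; ring.
Qed.

Lemma trace_Fm G Lam L : trace (Fm G Lam L) = (2 * G + 3 * Lam) * trace L.
Proof. unfold Fm; msimp; simpl; ring. Qed.

Lemma Fm_inj G Lam L K : G <> 0 -> 3 * Lam + 2 * G <> 0 -> Fm G Lam L = Fm G Lam K -> L = K.
Proof.
  intros HG HL E.
  assert (Ht : trace L = trace K).
  { assert (E2 := f_equal trace E). rewrite !trace_Fm in E2.
    apply (Rmult_eq_reg_l (2 * G + 3 * Lam)); auto. lra. }
  mext. assert (E2 := equal_f (equal_f E i) j). unfold Fm, madd, mscale in E2.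
  rewrite Ht in E2. apply (Rmult_eq_reg_l (2 * G)); [lra|]. lra.
Qed.

Lemma Fm_conj G Lam Q L : Orth Q -> Fm G Lam (mmul (mmul (mtr Q) L) Q) = mmul (mmul (mtr Q) (Fm G Lam L)) Q.
Proof.
  intro HQ. assert (Ht : trace (mmul (mmul (mtr Q) L) Q) = trace L).
  { assert (E : forall A B, trace (mmul A B) = trace (mmul B A)) by (intros; unfold trace; msimp; ring).
    rewrite E, <- mmul_assoc, orth_r, mmul_mid_l; auto. }
  unfold Fm. rewrite Ht, mmul_madd_r, mmul_madd_l, !mmul_scale_r, !mmul_scale_l, mmul_mid_r, HQ; auto.
Qed.

Lemma Fm_add G Lam L K : Fm G Lam (madd L K) = madd (Fm G Lam L) (Fm G Lam K).
Proof. unfold Fm; mcases; msimp; simpl; ring. Qed.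

Lemma conj_add P a b : madd (conj P a) (conj P b) = conj P (fun i => a i + b i).
Proof. unfold conj; mcases; msimp; simpl; ring. Qed.

Lemma conj_mul P a b : Orth P -> mmul (conj P a) (conj P b) = conj P (fun i => a i * b i).
Proof.
  intro HP. unfold conj.
  rewrite !mmul_assoc. rewrite <- (mmul_assoc (mtr P) P), HP, mmul_mid_l.
  rewrite <- (mmul_assoc (diag a)), diag_mul. auto.
Qed.

Lemma IsLog_diag d : (forall i, 0 < d i) -> IsLog (diag d) (diag (fun i => ln (d i))).
Proof.
  intro Hd. exists mid, d. repeat split; auto; [apply orth_mid| |];
  rewrite mtr_mid, mmul_mid_l, mmul_mid_r; auto.
Qed.


Lemma fw_A0_2 (T : Mat -> Mat) (G Lam : R) (HG : G <> 0) (HL : 3 * Lam + 2 * G <> 0) (HF : forall U, PSym U -> T U = Fm G Lam (matlog U)) : A0_2 T.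
Proof.
  intros U HU. rewrite HF by auto.
  assert (Hmid : IsLog mid mzero).
  { replace mid with (diag (fun _ => 1)) by (mcases; reflexivity).
    replace mzero with (diag (fun _ => ln 1)) by (rewrite ln_1; mcases; reflexivity).
    apply IsLog_diag; intros; lra. }
  assert (F0 : Fm G Lam mzero = mzero) by (unfold Fm; mcases; msimp; simpl; ring).
  split.
  - intro E. rewrite <- F0 in E. apply Fm_inj in E; auto.
    destruct (psym_log U HU) as [Q [d [HQ [Hd [HU1 HU2]]]]].
    assert (HI : IsLog U (matlog U)) by (rewrite HU2, HU1; apply IsLog_conj; auto).
    rewrite E in HI. apply (IsLog_determines _ _ _ HI Hmid).
  - intro E. subst. rewrite (matlog_spec _ _ Hmid); auto.
Qed.

Lemma fw_A0_3 (T : Mat -> Mat) (G Lam : R) (HG : G <> 0) (HL : 3 * Lam + 2 * G <> 0) (HF : forall U, PSym U -> T U = Fm G Lam (matlog U)) : A0_3 T.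
Proof.
  intros Q U HQ HU.
  destruct (psym_log U HU) as [P [d [HP [Hd [HU1 HU2]]]]].
  assert (HQt := orth_tr Q HQ).
  assert (E : mmul (mmul (mtr Q) U) Q = conj (mmul (mtr Q) P) d).
  { rewrite HU1. unfold conj. rewrite mtr_mmul, mtr_mtr, !mmul_assoc. auto. }
  rewrite E, HF, HF by (auto; apply psym_conj; auto; apply orth_mul; auto).
  rewrite (matlog_spec _ _ (IsLog_conj _ _ (orth_mul _ _ HQt HP) Hd)).
  rewrite <- Fm_conj by auto. f_equal.
  rewrite HU2. unfold conj. rewrite mtr_mmul, mtr_mtr, !mmul_assoc. auto.
Qed.

Lemma fw_A3 (T : Mat -> Mat) (G Lam : R) (HG : G <> 0) (HL : 3 * Lam + 2 * G <> 0) (HF : forall U, PSym U -> T U = Fm G Lam (matlog U)) : A3 T.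
Proof.
  intros U1 U2 H1 H2 HC.
  destruct (simul U1 U2 (proj1 H1) (proj1 H2) HC) as [P [a [b [HP [E1 E2]]]]].
  assert (Ha := posdef_eig _ _ _ H1 HP E1). assert (Hb := posdef_eig _ _ _ H2 HP E2).
  assert (Hab : forall i, 0 < a i * b i) by (intro i; apply Rmult_lt_0_compat; auto).
  rewrite E1, E2, conj_mul by auto.
  rewrite !HF by (apply psym_conj; auto).
  rewrite (matlog_spec _ _ (IsLog_conj _ _ HP Hab)), (matlog_spec _ _ (IsLog_conj _ _ HP Ha)),
    (matlog_spec _ _ (IsLog_conj _ _ HP Hb)).
  rewrite <- Fm_add, conj_add. f_equal. f_equal. apply functional_extensionality; intro i.
  apply ln_mult; auto.
Qed.

Lemma fw_A2 (T : Mat -> Mat) (G Lam : R) (HG : G <> 0) (HL : 3 * Lam + 2 * G <> 0) (HF : forall U, PSym U -> T U = Fm G Lam (matlog U)) : A2 T.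
Proof.
  intros lam Hlam. exists ((2 * G + 3 * Lam) * ln lam).
  assert (Hd : IsLog (mscale lam mid) (mscale (ln lam) mid)).
  { replace (mscale lam mid) with (diag (fun _ => lam)) by (mcases; msimp; simpl; ring).
    replace (mscale (ln lam) mid) with (diag (fun _ => ln lam)) by (mcases; msimp; simpl; ring).
    apply IsLog_diag; auto. }
  assert (FK : Fm G Lam (mscale (ln lam) mid) = mscale ((2 * G + 3 * Lam) * ln lam) mid)
    by (unfold Fm; mcases; msimp; simpl; ring).
  intros U HU. rewrite HF by auto. split.
  - intro E; subst. rewrite (matlog_spec _ _ Hd); auto.
  - intro E. rewrite <- FK in E. apply Fm_inj in E; auto.
    destruct (psym_log U HU) as [Q [d [HQ [Hd' [HU1 HU2]]]]].
    assert (HI : IsLog U (matlog U)) by (rewrite HU2, HU1; apply IsLog_conj; auto).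
    rewrite E in HI. apply (IsLog_determines _ _ _ HI Hd).
Qed.

Lemma fw_A1 (T : Mat -> Mat) (G Lam : R) (HG : G <> 0) (HL : 3 * Lam + 2 * G <> 0) (HF : forall U, PSym U -> T U = Fm G Lam (matlog U)) : Pilot.Defs.A1 T.
Proof.
  intros al Hal. exists (2 * G * ln al).
  set (dv := fun i => match i with i0 => al | i1 => / al | i2 => 1 end).
  assert (Hdv : forall i, 0 < dv i) by (intros []; simpl; try apply Rinv_0_lt_compat; lra).
  assert (Hd : IsLog (diag3 al (/ al) 1) (diag (fun i => ln (dv i)))) by (apply IsLog_diag; auto).
  assert (FK : Fm G Lam (diag (fun i => ln (dv i))) = diag3 (2 * G * ln al) (- (2 * G * ln al)) 0).
  { assert (l0 : ln (dv i0) = ln al) by reflexivity.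
    assert (l1 : ln (dv i1) = - ln al) by (apply ln_Rinv; auto).
    assert (l2 : ln (dv i2) = 0) by (apply ln_1).
    clearbody dv. clear Hd Hdv. unfold Fm; mcases; msimp; simpl; rewrite ?l0, ?l1, ?l2; ring. }
  intros U HU. rewrite HF by auto. split.
  - intro E; subst. rewrite (matlog_spec _ _ Hd); auto.
  - intro E. rewrite <- FK in E. apply Fm_inj in E; auto.
    destruct (psym_log U HU) as [Q [d [HQ [Hd' [HU1 HU2]]]]].
    assert (HI : IsLog U (matlog U)) by (rewrite HU2, HU1; apply IsLog_conj; auto).
    rewrite E in HI. apply (IsLog_determines _ _ _ HI Hd).
Qed.


Definition mnorm (X : Mat) : R := sum3 (fun i => sum3 (fun j => Rabs (X i j))).

Lemma mdist_mnorm A B : mdist A B = mnorm (msub A B).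
Proof. reflexivity. Qed.

Lemma mnorm_pos X : 0 <= mnorm X.
Proof.
  unfold mnorm, sum3.
  repeat match goal with |- context [Rabs ?x] => pose proof (Rabs_pos x); fail | _ => idtac end.
  pose proof (Rabs_pos (X i0 i0)); pose proof (Rabs_pos (X i0 i1)); pose proof (Rabs_pos (X i0 i2));
  pose proof (Rabs_pos (X i1 i0)); pose proof (Rabs_pos (X i1 i1)); pose proof (Rabs_pos (X i1 i2));
  pose proof (Rabs_pos (X i2 i0)); pose proof (Rabs_pos (X i2 i1)); pose proof (Rabs_pos (X i2 i2)). lra.
Qed.

Lemma abs3 x y z : Rabs (x + y + z) <= Rabs x + Rabs y + Rabs z.
Proof.
  eapply Rle_trans; [apply Rabs_triang|]. pose proof (Rabs_triang x y). lra.
Qed.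

Lemma term_bound a x b : Rabs a <= 1 -> Rabs b <= 1 -> Rabs (a * x * b) <= Rabs x.
Proof.
  intros Ha Hb. rewrite !Rabs_mult.
  pose proof (Rabs_pos a); pose proof (Rabs_pos b); pose proof (Rabs_pos x).
  assert (Rabs a * Rabs x <= Rabs x) by nra. nra.
Qed.

Lemma entry_bound (A X B : Mat) i j : (forall k l, Rabs (A k l) <= 1) -> (forall k l, Rabs (B k l) <= 1) ->
  Rabs (mmul (mmul A X) (mtr B) i j) <= mnorm X.
Proof.
  intros HA HB.
  assert (E : mmul (mmul A X) (mtr B) i j =
     (A i i0 * X i0 i0 * B j i0 + A i i0 * X i0 i1 * B j i1 + A i i0 * X i0 i2 * B j i2)
   + (A i i1 * X i1 i0 * B j i0 + A i i1 * X i1 i1 * B j i1 + A i i1 * X i1 i2 * B j i2)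
   + (A i i2 * X i2 i0 * B j i0 + A i i2 * X i2 i1 * B j i1 + A i i2 * X i2 i2 * B j i2))
    by (msimp; ring).
  rewrite E. unfold mnorm, sum3.
  eapply Rle_trans; [apply abs3|].
  repeat (apply Rplus_le_compat); (eapply Rle_trans; [apply abs3|]);
  repeat (apply Rplus_le_compat); apply term_bound; auto.
Qed.

Lemma sandwich_bound (A X B : Mat) : (forall k l, Rabs (A k l) <= 1) -> (forall k l, Rabs (B k l) <= 1) ->
  mnorm (mmul (mmul A X) (mtr B)) <= 9 * mnorm X.
Proof.
  intros HA HB. unfold mnorm at 1, sum3.
  pose proof (fun i j => entry_bound A X B i j HA HB) as H.
  pose proof (H i0 i0); pose proof (H i0 i1); pose proof (H i0 i2);
  pose proof (H i1 i0); pose proof (H i1 i1); pose proof (H i1 i2);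
  pose proof (H i2 i0); pose proof (H i2 i1); pose proof (H i2 i2). lra.
Qed.

Lemma orth_entry Q : Orth Q -> forall k l, Rabs (Q k l) <= 1.
Proof.
  intros HQ k l. assert (E := equal_f (equal_f HQ l) l). msimp.
  assert (Hs : Q k l * Q k l <= 1).
  { destruct l; simpl in E; destruct k;
    pose proof (Rle_0_sqr (Q i0 i0)); pose proof (Rle_0_sqr (Q i1 i0)); pose proof (Rle_0_sqr (Q i2 i0));
    pose proof (Rle_0_sqr (Q i0 i1)); pose proof (Rle_0_sqr (Q i1 i1)); pose proof (Rle_0_sqr (Q i2 i1));
    pose proof (Rle_0_sqr (Q i0 i2)); pose proof (Rle_0_sqr (Q i1 i2)); pose proof (Rle_0_sqr (Q i2 i2));
    unfold Rsqr in *; lra. }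
  apply Rabs_le. split; nra.
Qed.

Lemma orth_tr_entry Q : Orth Q -> forall k l, Rabs (mtr Q k l) <= 1.
Proof. intros HQ k l. unfold mtr. apply orth_entry; auto. Qed.

Lemma ln_lip x y c : 0 < c -> c <= x -> c <= y -> Rabs (ln x - ln y) <= Rabs (x - y) / c.
Proof.
  intros Hc Hx Hy.
  assert (K : forall a b, c <= a -> c <= b -> ln a - ln b <= Rabs (a - b) / c).
  { intros a b Ha Hb.
    assert (Hl : ln (a / b) <= a / b - 1).
    { pose proof (exp_ineq1_le (ln (a / b))). rewrite exp_ln in H; [lra|].
      apply Rdiv_lt_0_compat; lra. }
    unfold Rdiv in Hl. rewrite ln_mult, ln_Rinv in Hl by (try apply Rinv_0_lt_compat; lra).
    assert (a * / b - 1 = (a - b) / b) by (field; lra).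
    destruct (Rle_or_lt 0 (a - b)).
    - rewrite Rabs_right by lra.
      assert ((a - b) / b <= (a - b) / c).
      { unfold Rdiv. apply Rmult_le_compat_l; auto. apply Rinv_le_contravar; lra. }
      lra.
    - assert ((a - b) / b < 0) by (apply Rdiv_neg_pos; lra).
      assert (0 <= Rabs (a - b) / c) by (unfold Rdiv; apply Rmult_le_pos; [apply Rabs_pos | left; apply Rinv_0_lt_compat; lra]). lra. }
  apply Rabs_le. split.
  - rewrite Rabs_minus_sym. specialize (K y x Hy Hx). lra.
  - apply K; auto.
Qed.

Ltac nine X := pose proof (Rabs_pos (X i0 i0)); pose proof (Rabs_pos (X i0 i1)); pose proof (Rabs_pos (X i0 i2));
  pose proof (Rabs_pos (X i1 i0)); pose proof (Rabs_pos (X i1 i1)); pose proof (Rabs_pos (X i1 i2));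
  pose proof (Rabs_pos (X i2 i0)); pose proof (Rabs_pos (X i2 i1)); pose proof (Rabs_pos (X i2 i2)).

Lemma mnorm_add A B : mnorm (madd A B) <= mnorm A + mnorm B.
Proof.
  unfold mnorm, madd, sum3.
  pose proof (fun i j => Rabs_triang (A i j) (B i j)) as H.
  pose proof (H i0 i0); pose proof (H i0 i1); pose proof (H i0 i2);
  pose proof (H i1 i0); pose proof (H i1 i1); pose proof (H i1 i2);
  pose proof (H i2 i0); pose proof (H i2 i1); pose proof (H i2 i2). lra.
Qed.

Lemma mnorm_scale c A : mnorm (mscale c A) = Rabs c * mnorm A.
Proof. unfold mnorm, mscale, sum3. rewrite !Rabs_mult. ring. Qed.

Lemma mnorm_mid : mnorm mid = 3.
Proof. unfold mnorm, mid, sum3; simpl. rewrite Rabs_R1, Rabs_R0. ring. Qed.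

Lemma trace_bound Z : Rabs (trace Z) <= mnorm Z.
Proof.
  unfold trace, mnorm, sum3. eapply Rle_trans; [apply abs3|]. nine Z. lra.
Qed.

Lemma Fm_lin G Lam L N : msub (Fm G Lam L) (Fm G Lam N) = Fm G Lam (msub L N).
Proof. unfold Fm; mcases; msimp; simpl; ring. Qed.

Lemma Fm_bound G Lam Z : mnorm (Fm G Lam Z) <= (2 * Rabs G + 3 * Rabs Lam) * mnorm Z.
Proof.
  unfold Fm. eapply Rle_trans; [apply mnorm_add|].
  rewrite !mnorm_scale, mnorm_mid, !Rabs_mult.
  rewrite (Rabs_right 2) by lra.
  pose proof (trace_bound Z). pose proof (Rabs_pos Lam). pose proof (Rabs_pos G).
  pose proof (mnorm_pos Z).
  assert (Rabs Lam * Rabs (trace Z) <= Rabs Lam * mnorm Z) by (apply Rmult_le_compat_l; auto).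
  nra.
Qed.

Lemma conj_diff_entry Q P a b : Orth Q -> Orth P ->
  mmul (mmul (mtr Q) (msub (conj Q a) (conj P b))) P =
  fun i j => (a i - b j) * mmul (mtr Q) P i j.
Proof.
  intros HQ HP.
  assert (E1 : mmul (mmul (mtr Q) (conj Q a)) P = mmul (diag a) (mmul (mtr Q) P)).
  { unfold conj. rewrite !mmul_assoc, <- (mmul_assoc (mtr Q) Q), HQ, mmul_mid_l. auto. }
  assert (E2 : mmul (mmul (mtr Q) (conj P b)) P = mmul (mmul (mtr Q) P) (diag b)).
  { unfold conj. rewrite !mmul_assoc, HP, mmul_mid_r. auto. }
  assert (E : mmul (mmul (mtr Q) (msub (conj Q a) (conj P b))) P =
     msub (mmul (mmul (mtr Q) (conj Q a)) P) (mmul (mmul (mtr Q) (conj P b)) P)) by mring.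
  rewrite E, E1, E2. clear. mext. msimp. destruct i, j; simpl; ring.
Qed.

Lemma log_lip_mat Q P d e c : Orth Q -> Orth P -> 0 < c -> (forall i, c <= d i) -> (forall i, c <= e i) ->
  mnorm (msub (conj Q (fun i => ln (d i))) (conj P (fun i => ln (e i)))) <=
  81 / c * mnorm (msub (conj Q d) (conj P e)).
Proof.
  intros HQ HP Hc Hd He.
  set (W := mmul (mtr Q) P).
  set (X := mmul (mmul (mtr Q) (msub (conj Q (fun i => ln (d i))) (conj P (fun i => ln (e i))))) P).
  set (Y := mmul (mmul (mtr Q) (msub (conj Q d) (conj P e))) P).
  assert (HX : X = fun i j => (ln (d i) - ln (e j)) * W i j) by (apply conj_diff_entry; auto).
  assert (HY : Y = fun i j => (d i - e j) * W i j) by (apply conj_diff_entry; auto).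
  assert (HXY : mnorm X <= / c * mnorm Y).
  { rewrite HX, HY. unfold mnorm, sum3.
    assert (K : forall i j, Rabs ((ln (d i) - ln (e j)) * W i j) <= / c * Rabs ((d i - e j) * W i j)).
    { intros i j. rewrite !Rabs_mult. pose proof (ln_lip (d i) (e j) c Hc (Hd i) (He j)).
      pose proof (Rabs_pos (W i j)). unfold Rdiv in H.
      rewrite <- Rmult_assoc. apply Rmult_le_compat_r; auto. lra. }
    pose proof (K i0 i0); pose proof (K i0 i1); pose proof (K i0 i2);
    pose proof (K i1 i0); pose proof (K i1 i1); pose proof (K i1 i2);
    pose proof (K i2 i0); pose proof (K i2 i1); pose proof (K i2 i2). lra. }
  assert (HLN : msub (conj Q (fun i => ln (d i))) (conj P (fun i => ln (e i))) = mmul (mmul Q X) (mtr P)).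
  { unfold X. rewrite <- !mmul_assoc, orth_r, mmul_mid_l, mmul_assoc, orth_r, mmul_mid_r; auto. }
  rewrite HLN.
  eapply Rle_trans; [apply sandwich_bound; apply orth_entry; auto|].
  assert (HYb : mnorm Y <= 9 * mnorm (msub (conj Q d) (conj P e))).
  { unfold Y. rewrite <- (mtr_mtr P) at 2. apply sandwich_bound; apply orth_tr_entry; auto. }
  assert (0 < / c) by (apply Rinv_0_lt_compat; auto).
  unfold Rdiv. nra.
Qed.

Lemma eig_lower Q P d e m : Orth Q -> Orth P -> (forall i, m <= d i) ->
  forall j, m - mnorm (msub (conj P e) (conj Q d)) <= e j.
Proof.
  intros HQ HP Hd j.
  set (W := mmul (mtr Q) P).
  assert (HW : Orth W) by (unfold W; apply orth_mul; auto; apply orth_tr; auto).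
  assert (E1 : mmul (mmul (mtr P) (conj P e)) P =
     madd (mmul (mmul (mtr W) (diag d)) W) (mmul (mmul (mtr P) (msub (conj P e) (conj Q d))) P)).
  { unfold W. rewrite mtr_mmul, mtr_mtr.
    replace (mmul (mmul (mmul (mtr P) Q) (diag d)) (mmul (mtr Q) P))
      with (mmul (mmul (mtr P) (conj Q d)) P) by (unfold conj; rewrite !mmul_assoc; auto).
    mring. }
  rewrite conj_conj in E1 by auto.
  assert (E := equal_f (equal_f E1 j) j).
  assert (Ed : diag e j j = e j) by (destruct j; reflexivity).
  assert (Hb := entry_bound (mtr P) (msub (conj P e) (conj Q d)) (mtr P) j j
                  (orth_tr_entry P HP) (orth_tr_entry P HP)).
  rewrite mtr_mtr in Hb.
  assert (HWj := equal_f (equal_f HW j) j).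
  assert (Hlow : m <= mmul (mmul (mtr W) (diag d)) W j j).
  { clearbody W.
    assert (Ex : mmul (mmul (mtr W) (diag d)) W j j = d i0 * (W i0 j * W i0 j) + d i1 * (W i1 j * W i1 j) + d i2 * (W i2 j * W i2 j))
      by (msimp; destruct j; simpl; ring).
    assert (Es : W i0 j * W i0 j + W i1 j * W i1 j + W i2 j * W i2 j = 1)
      by (msimp; destruct j; simpl in *; lra).
    rewrite Ex.
    assert (0 <= (d i0 - m) * (W i0 j * W i0 j)) by (apply Rmult_le_pos; [pose proof (Hd i0); lra | apply Rle_0_sqr]).
    assert (0 <= (d i1 - m) * (W i1 j * W i1 j)) by (apply Rmult_le_pos; [pose proof (Hd i1); lra | apply Rle_0_sqr]).
    assert (0 <= (d i2 - m) * (W i2 j * W i2 j)) by (apply Rmult_le_pos; [pose proof (Hd i2); lra | apply Rle_0_sqr]).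
    assert (m * (W i0 j * W i0 j + W i1 j * W i1 j + W i2 j * W i2 j) = m) by (rewrite Es; ring).
    lra. }
  unfold madd in E. rewrite Ed in E.
  pose proof (Rle_abs (mmul (mmul (mtr P) (msub (conj P e) (conj Q d))) P j j)).
  pose proof (Rabs_pos (mmul (mmul (mtr P) (msub (conj P e) (conj Q d))) P j j)).
  assert (- Rabs (mmul (mmul (mtr P) (msub (conj P e) (conj Q d))) P j j) <=
            mmul (mmul (mtr P) (msub (conj P e) (conj Q d))) P j j).
  { rewrite <- Rabs_Ropp. pose proof (Rle_abs (- mmul (mmul (mtr P) (msub (conj P e) (conj Q d))) P j j)). lra. }
  lra.
Qed.

Lemma fw_A0_1 (T : Mat -> Mat) (G Lam : R) (HF : forall U, PSym U -> T U = Fm G Lam (matlog U)) : A0_1 T.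
Proof.
  intros U HU eps Heps.
  destruct (psym_log U HU) as [Q [d [HQ [Hd [HU1 HU2]]]]].
  set (m := Rmin (d i0) (Rmin (d i1) (d i2))).
  assert (Hm : forall i, m <= d i).
  { intros []; unfold m; [apply Rmin_l| eapply Rle_trans; [apply Rmin_r|]..]; [apply Rmin_l|apply Rmin_r]. }
  assert (Hm0 : 0 < m) by (unfold m; apply Rmin_glb_lt; [|apply Rmin_glb_lt]; auto).
  set (K := 2 * Rabs G + 3 * Rabs Lam + 1).
  assert (HK : 0 < K) by (unfold K; pose proof (Rabs_pos G); pose proof (Rabs_pos Lam); lra).
  exists (Rmin (m / 2) (eps * m / (162 * K))). split.
  { apply Rmin_glb_lt; [lra|]. apply Rdiv_lt_0_compat; [nra|lra]. }
  intros V HV Hdist.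
  destruct (psym_log V HV) as [P [e [HP [He [HV1 HV2]]]]].
  rewrite mdist_mnorm in *.
  pose proof (Rmin_l (m / 2) (eps * m / (162 * K))) as Hd1.
  pose proof (Rmin_r (m / 2) (eps * m / (162 * K))) as Hd2.
  set (x := mnorm (msub V U)) in *.
  assert (Hx0 : 0 <= x) by apply mnorm_pos.
  assert (He2 : forall j, m / 2 <= e j).
  { intro j. pose proof (eig_lower Q P d e m HQ HP Hm j). rewrite <- HV1, <- HU1 in H. fold x in H. lra. }
  assert (Hd2' : forall i, m / 2 <= d i) by (intro i; pose proof (Hm i); lra).
  assert (Hlip := log_lip_mat P Q e d (m / 2) HP HQ ltac:(lra) He2 Hd2').
  rewrite <- HV1, <- HU1, <- HV2, <- HU2 in Hlip. fold x in Hlip.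
  rewrite !HF by auto. rewrite Fm_lin.
  eapply Rle_lt_trans; [apply Fm_bound|].
  set (y := mnorm (msub (matlog V) (matlog U))) in *.
  assert (Hy0 : 0 <= y) by apply mnorm_pos.
  assert (Hc : 81 / (m / 2) = 162 / m) by (field; lra).
  rewrite Hc in Hlip.
  assert (HK' : 2 * Rabs G + 3 * Rabs Lam <= K) by (unfold K; lra).
  assert (H2 : 0 <= 2 * Rabs G + 3 * Rabs Lam) by (pose proof (Rabs_pos G); pose proof (Rabs_pos Lam); lra).
  assert (Hxb : x < eps * m / (162 * K)) by lra.
  assert (Hy : y < eps / K).
  { eapply Rle_lt_trans; [exact Hlip|].
    apply (Rmult_lt_reg_l (m / 162)); [lra|].
    replace (m / 162 * (162 / m * x)) with x by (field; lra).
    replace (m / 162 * (eps / K)) with (eps * m / (162 * K)) by (field; lra). auto. }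
  assert (Hy2 : K * y < eps).
  { apply (Rmult_lt_reg_l (/ K)); [apply Rinv_0_lt_compat; lra|].
    replace (/ K * (K * y)) with y by (field; lra). unfold Rdiv in Hy. lra. }
  nra.
Qed.

Lemma cauchy (h : R -> R) : (forall x y, h (x + y) = h x + h y) ->
  (forall eps, 0 < eps -> exists delta, 0 < delta /\ forall x, Rabs x < delta -> Rabs (h x) < eps) ->
  forall x, h x = x * h 1.
Proof.
  intros Hadd Hc.
  set (phi := fun x => h x - x * h 1).
  assert (Padd : forall x y, phi (x + y) = phi x + phi y) by (intros; unfold phi; rewrite Hadd; ring).
  assert (P0 : phi 0 = 0) by (pose proof (Padd 0 0); rewrite Rplus_0_r in H; lra).
  assert (Pneg : forall x, phi (- x) = - phi x) by (intro x; pose proof (Padd x (-x)); rewrite Rplus_opp_r, P0 in H; lra).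
  assert (Pint : forall (z : Z) x, phi (IZR z * x) = IZR z * phi x).
  { intros z x. induction z using Z.peano_ind.
    - simpl. rewrite Rmult_0_l, P0; ring.
    - rewrite succ_IZR, Rmult_plus_distr_r, Padd, IHz, Rmult_1_l; ring.
    - rewrite <- Z.sub_1_r, minus_IZR. replace ((IZR z - 1) * x) with (IZR z * x + - x) by ring.
      rewrite Padd, IHz, Pneg; ring. }
  assert (P1 : phi 1 = 0) by (unfold phi; ring).
  assert (Pc : forall eps, 0 < eps -> exists delta, 0 < delta /\ forall x, Rabs x < delta -> Rabs (phi x) < eps).
  { intros eps He. destruct (Hc (eps / 2)) as [d1 [Hd1 H1]]; [lra|].
    set (d2 := eps / 2 / (Rabs (h 1) + 1)).
    assert (Hd2 : 0 < d2) by (unfold d2; apply Rdiv_lt_0_compat; [lra| pose proof (Rabs_pos (h 1)); lra]).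
    exists (Rmin d1 d2). split; [apply Rmin_glb_lt; auto|].
    intros x Hx. unfold phi.
    assert (Hx1 : Rabs x < d1) by (pose proof (Rmin_l d1 d2); lra).
    assert (Hx2 : Rabs x < d2) by (pose proof (Rmin_r d1 d2); lra).
    specialize (H1 x Hx1).
    assert (Rabs (x * h 1) <= eps / 2).
    { rewrite Rabs_mult. pose proof (Rabs_pos (h 1)). pose proof (Rabs_pos x).
      assert (Hb : Rabs x * (Rabs (h 1) + 1) <= d2 * (Rabs (h 1) + 1)) by (apply Rmult_le_compat_r; lra).
      unfold d2 in Hb. replace (eps / 2 / (Rabs (h 1) + 1) * (Rabs (h 1) + 1)) with (eps / 2) in Hb by (field; lra).
      nra. }
    unfold Rminus. eapply Rle_lt_trans; [apply Rabs_triang|]. rewrite Rabs_Ropp. lra. }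
  intro x. enough (phi x = 0) by (unfold phi in H; lra).
  destruct (Req_dec (phi x) 0) as [Z|Z]; auto. exfalso.
  assert (Hp : 0 < Rabs (phi x)) by (apply Rabs_pos_lt; auto).
  destruct (Pc _ Hp) as [dl [Hdl Hdx]].
  destruct (archimed (/ dl)) as [Ha1 Ha2].
  set (N := up (/ dl)) in *.
  assert (HN : 0 < IZR N) by (pose proof (Rinv_0_lt_compat dl Hdl); lra).
  assert (HNi : / IZR N < dl).
  { apply (Rmult_lt_reg_l (IZR N)); auto. rewrite Rinv_r by lra.
    apply (Rmult_lt_reg_l (/ dl)); [apply Rinv_0_lt_compat; auto|].
    replace (/ dl * (IZR N * dl)) with (IZR N) by (field; lra). lra. }
  assert (PN : phi (/ IZR N) = 0).
  { assert (E := Pint N (/ IZR N)). rewrite Rinv_r in E by lra. rewrite P1 in E.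
    apply (Rmult_eq_reg_l (IZR N)); lra. }
  destruct (archimed (IZR N * x)) as [Hb1 Hb2].
  set (k := (up (IZR N * x) - 1)%Z).
  set (r := IZR k * / IZR N).
  assert (Pr : phi r = 0) by (unfold r; rewrite Pint, PN; ring).
  assert (Hk : IZR k = IZR (up (IZR N * x)) - 1) by (unfold k; rewrite minus_IZR; auto).
  assert (Hxr : 0 <= x - r < / IZR N).
  { unfold r. rewrite Hk.
    assert (E : x - (IZR (up (IZR N * x)) - 1) * / IZR N = (IZR N * x - IZR (up (IZR N * x)) + 1) * / IZR N)
      by (field; lra).
    rewrite E. pose proof (Rinv_0_lt_compat _ HN). split; [apply Rmult_le_pos; lra|].
    rewrite <- (Rmult_1_l (/ IZR N)) at 2. apply Rmult_lt_compat_r; lra. }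
  assert (Hsmall : Rabs (x - r) < dl) by (rewrite Rabs_right by lra; lra).
  specialize (Hdx _ Hsmall).
  replace (phi (x - r)) with (phi x) in Hdx.
  - lra.
  - unfold Rminus. rewrite Padd, Pneg, Pr. ring.
Qed.

Definition ev (x y z : R) : Vec := fun i => match i with i0 => exp x | i1 => exp y | i2 => exp z end.

Lemma ev_pos x y z i : 0 < ev x y z i.
Proof. destruct i; apply exp_pos. Qed.

Lemma psym_diag d : (forall i, 0 < d i) -> PSym (diag d).
Proof.
  intro Hd. replace (diag d) with (conj mid d) by (unfold conj; rewrite mtr_mid, mmul_mid_l, mmul_mid_r; auto).
  apply psym_conj; auto. apply orth_mid.
Qed.

Lemma entry_le_mdist A B k l : Rabs (A k l - B k l) <= mdist A B.
Proof.
  unfold mdist, sum3. set (X := fun i j => A i j - B i j).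
  change (Rabs (X k l) <= Rabs (X i0 i0) + Rabs (X i0 i1) + Rabs (X i0 i2) +
    (Rabs (X i1 i0) + Rabs (X i1 i1) + Rabs (X i1 i2)) + (Rabs (X i2 i0) + Rabs (X i2 i1) + Rabs (X i2 i2))).
  nine X. destruct k, l; lra.
Qed.

Definition S1 : Mat := diag (fun i => match i with i0 => -1 | _ => 1 end).
Definition S2 : Mat := diag (fun i => match i with i1 => -1 | _ => 1 end).

Lemma T_diag_diag T (H3 : A0_3 T) d : (forall i, 0 < d i) -> T (diag d) = diag (fun i => T (diag d) i i).
Proof.
  intro Hd. assert (HP := psym_diag d Hd).
  assert (O1 : Orth S1) by (unfold Orth, S1; mring).
  assert (O2 : Orth S2) by (unfold Orth, S2; mring).
  assert (E1 := H3 S1 (diag d) O1 HP). assert (E2 := H3 S2 (diag d) O2 HP).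
  replace (mmul (mmul (mtr S1) (diag d)) S1) with (diag d) in E1 by (unfold S1; mring).
  replace (mmul (mmul (mtr S2) (diag d)) S2) with (diag d) in E2 by (unfold S2; mring).
  set (X := T (diag d)) in *. clearbody X.
  assert (F1 := fun i j => equal_f (equal_f E1 i) j). assert (F2 := fun i j => equal_f (equal_f E2 i) j).
  unfold S1, S2 in *. msimp.
  apply diag_self.
  - specialize (F1 i0 i1); simpl in F1; lra.
  - specialize (F1 i0 i2); simpl in F1; lra.
  - specialize (F1 i1 i0); simpl in F1; lra.
  - specialize (F2 i1 i2); simpl in F2; lra.
  - specialize (F1 i2 i0); simpl in F1; lra.
  - specialize (F2 i2 i1); simpl in F2; lra.
Qed.

Lemma T_mul T (H3 : A3 T) a b : (forall i, 0 < a i) -> (forall i, 0 < b i) ->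
  T (diag (fun i => a i * b i)) = madd (T (diag a)) (T (diag b)).
Proof.
  intros Ha Hb. rewrite <- diag_mul. apply H3; try apply psym_diag; auto.
  unfold coaxial. rewrite !diag_mul. f_equal. apply functional_extensionality; intro; ring.
Qed.

Definition P01 : Mat := fun i j => match i, j with i0, i1 | i1, i0 | i2, i2 => 1 | _, _ => 0 end.
Definition P02 : Mat := fun i j => match i, j with i0, i2 | i2, i0 | i1, i1 => 1 | _, _ => 0 end.
Definition P12 : Mat := fun i j => match i, j with i1, i2 | i2, i1 | i0, i0 => 1 | _, _ => 0 end.

Lemma P01_orth : Orth P01. Proof. unfold Orth, P01; mring. Qed.
Lemma P02_orth : Orth P02. Proof. unfold Orth, P02; mring. Qed.
Lemma P12_orth : Orth P12. Proof. unfold Orth, P12; mring. Qed.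

Lemma diag_cont T (H1 : A0_1 T) (H2 : A0_2 T) k :
  forall eps, 0 < eps -> exists delta, 0 < delta /\ forall t, Rabs t < delta -> Rabs (T (diag (ev t 0 0)) k k) < eps.
Proof.
  intros eps He.
  assert (Hmid : PSym mid) by (replace mid with (diag (fun _ => 1)) by (mcases; reflexivity); apply psym_diag; intros; lra).
  assert (T0 : T mid = mzero) by (apply H2; auto).
  destruct (H1 mid Hmid eps He) as [d1 [Hd1 Hc]].
  assert (Hexp := derivable_continuous _ derivable_exp 0).
  destruct (Hexp d1 Hd1) as [d2 [Hd2 Hx]].
  exists d2. split; auto. intros t Ht.
  assert (E0 : diag (ev 0 0 0) = mid) by (unfold ev; rewrite exp_0; mcases; reflexivity).
  destruct (Req_dec t 0) as [Zt|Zt].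
  { subst. rewrite E0, T0. unfold mzero. rewrite Rabs_R0; auto. }
  assert (Hd : Rabs (exp t - 1) < d1).
  { specialize (Hx t). simpl in Hx. unfold R_dist in Hx. rewrite exp_0 in Hx. apply Hx.
    split; [split; [exact I| auto] | rewrite Rminus_0_r; auto]. }
  assert (Hm : mdist (diag (ev t 0 0)) mid < d1).
  { unfold mdist, diag, mid, ev, sum3; simpl. rewrite exp_0.
    replace (1 - 1) with 0 by ring. replace (0 - 0) with 0 by ring. rewrite Rabs_R0. rewrite !Rplus_0_r. exact Hd. }
  specialize (Hc _ (psym_diag _ (ev_pos t 0 0)) Hm). rewrite T0 in Hc.
  pose proof (entry_le_mdist (T (diag (ev t 0 0))) mzero k k). change (mzero k k) with 0 in H. rewrite Rminus_0_r in H. lra.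
Qed.

Lemma backward T (H : AllAxioms T) : exists G Lam, G <> 0 /\ 3 * Lam + 2 * G <> 0 /\
  forall U, PSym U -> T U = Fm G Lam (matlog U).
Proof.
  destruct H as (H1 & H2 & H3 & _ & _ & H4).
  set (f := fun t => T (diag (ev t 0 0))).
  assert (Hadd : forall s t, f (s + t) = madd (f s) (f t)).
  { intros s t. unfold f. rewrite <- T_mul by (auto; apply ev_pos). f_equal. f_equal.
    vcases; unfold ev; rewrite ?exp_plus, ?Rplus_0_r, ?exp_0; ring. }
  assert (Hk : forall k t, f t k k = t * f 1 k k).
  { intros k. apply (cauchy (fun t => f t k k)).
    - intros x y. rewrite Hadd. reflexivity.
    - apply diag_cont; auto. }
  assert (Hdiag : forall t, f t = diag (fun i => f t i i)) by (intro t; apply T_diag_diag; auto; apply ev_pos).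
  assert (Hsym : forall t, f t i2 i2 = f t i1 i1).
  { intro t. assert (E := H3 P12 (diag (ev t 0 0)) P12_orth (psym_diag _ (ev_pos t 0 0))).
    replace (mmul (mmul (mtr P12) (diag (ev t 0 0))) P12) with (diag (ev t 0 0)) in E
      by (unfold P12, ev; mcases; msimp; simpl; ring).
    fold (f t) in E. assert (E2 := equal_f (equal_f E i1) i1). unfold P12 in E2. msimp. simpl in E2. lra. }
  set (u := f 1 i0 i0). set (v := f 1 i1 i1).
  assert (Hform : forall t, f t = diag (fun i => match i with i0 => t * u | _ => t * v end)).
  { intro t. rewrite Hdiag. f_equal. vcases.
    - apply Hk.
    - apply Hk.
    - rewrite Hsym. apply Hk. }
  assert (Hy : forall y, T (diag (ev 0 y 0)) = mmul (mmul (mtr P01) (f y)) P01).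
  { intro y. unfold f. rewrite <- H3 by (auto; apply P01_orth || apply psym_diag, ev_pos). f_equal.
    unfold P01, ev; mcases; msimp; simpl; ring. }
  assert (Hz : forall z, T (diag (ev 0 0 z)) = mmul (mmul (mtr P02) (f z)) P02).
  { intro z. unfold f. rewrite <- H3 by (auto; apply P02_orth || apply psym_diag, ev_pos). f_equal.
    unfold P02, ev; mcases; msimp; simpl; ring. }
  set (G := (u - v) / 2). set (Lam := v).
  assert (Hgen : forall d, (forall i, 0 < d i) -> T (diag d) = Fm G Lam (diag (fun i => ln (d i)))).
  { intros d Hd.
    assert (Ed : d = fun i => (ev (ln (d i0)) 0 0 i * ev 0 (ln (d i1)) 0 i) * ev 0 0 (ln (d i2)) i).
    { vcases; unfold ev; rewrite exp_0, exp_ln by auto; ring. }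
    rewrite Ed at 1. rewrite T_mul, T_mul; try exact H4; try (intro; apply ev_pos);
      try (intro; apply Rmult_lt_0_compat; apply ev_pos).
    rewrite Hy, Hz. fold (f (ln (d i0))). rewrite !Hform.
    unfold Fm, G, Lam, P01, P02. clearbody u v. mcases; msimp; simpl; field. }
  exists G, Lam. split; [|split].
  - intro HG.
    set (d := ev 1 (-1) 0).
    assert (E : T (diag d) = mzero).
    { rewrite Hgen by apply ev_pos. clearbody G Lam.
      unfold Fm. rewrite HG. mcases; msimp; unfold d, ev; simpl; rewrite ?ln_exp; ring. }
    apply H2 in E; [|apply psym_diag, ev_pos].
    assert (E2 := equal_f (equal_f E i0) i0). unfold d, ev, diag, mid in E2; simpl in E2.
    pose proof (exp_ineq1 1 ltac:(lra)). lra.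
  - intro HG.
    set (d := ev 1 1 1).
    assert (E : T (diag d) = mzero).
    { rewrite Hgen by apply ev_pos. clearbody G Lam.
      unfold Fm. mcases; msimp; unfold d, ev; simpl; rewrite ?ln_exp; try ring; lra. }
    apply H2 in E; [|apply psym_diag, ev_pos].
    assert (E2 := equal_f (equal_f E i0) i0). unfold d, ev, diag, mid in E2; simpl in E2.
    pose proof (exp_ineq1 1 ltac:(lra)). lra.
  - intros U HU.
    destruct (psym_log U HU) as [Q [d [HQ [Hd [HU1 HU2]]]]].
    assert (E := H3 Q U HQ HU).
    assert (Ed : mmul (mmul (mtr Q) U) Q = diag d) by (rewrite HU1; apply conj_conj; auto).
    rewrite Ed, Hgen in E by auto.
    rewrite HU2.
    assert (HQt := orth_tr Q HQ).
    replace (T U) with (mmul (mmul Q (mmul (mmul (mtr Q) (T U)) Q)) (mtr Q))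
      by (rewrite !mmul_assoc, orth_r, mmul_mid_r, <- mmul_assoc, orth_r, mmul_mid_l; auto).
    rewrite <- E. unfold conj.
    pose proof (Fm_conj G Lam (mtr Q) (diag (fun i => ln (d i))) HQt) as F.
    rewrite mtr_mtr in F. rewrite F. reflexivity.
Qed.

Lemma dev_form G K L : madd (mscale (2 * G) (dev3 L)) (mscale (K * trace L) mid) = Fm G (K - 2 * G / 3) L.
Proof. unfold dev3, Fm. mcases; msimp; simpl; field. Qed.

Theorem mainTheorem7 (T : Mat -> Mat) (HT : forall U, PSym U -> Sym (T U)) :
  (AllAxioms T <->
    exists G Lam : R, G <> 0 /\ 3 * Lam + 2 * G <> 0 /\
      forall U, PSym U ->
        T U = madd (mscale (2 * G) (matlog U))
                   (mscale (Lam * trace (matlog U)) mid)) /\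
  (AllAxioms T <->
    exists G K : R, G <> 0 /\ K <> 0 /\
      forall U, PSym U ->
        T U = madd (mscale (2 * G) (dev3 (matlog U)))
                   (mscale (K * trace (matlog U)) mid)).
Proof.
  assert (P1 : AllAxioms T <-> exists G Lam : R, G <> 0 /\ 3 * Lam + 2 * G <> 0 /\
      forall U, PSym U -> T U = Fm G Lam (matlog U)).
  { split.
    - apply backward.
    - intros (G & Lam & HG & HL & HF). unfold AllAxioms.
      split; [exact (fw_A0_1 T G Lam HF)|].
      split; [exact (fw_A0_2 T G Lam HG HL HF)|].
      split; [exact (fw_A0_3 T G Lam HG HL HF)|].
      split; [exact (fw_A1 T G Lam HG HL HF)|].
      split; [exact (fw_A2 T G Lam HG HL HF)|].
      exact (fw_A3 T G Lam HG HL HF). }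
  split; [exact P1|].
  rewrite P1. split.
  - intros (G & Lam & HG & HL & HF). exists G, (Lam + 2 * G / 3). split; [auto|split].
    + intro E. apply HL. replace (3 * Lam + 2 * G) with (3 * (Lam + 2 * G / 3)) by field. rewrite E; ring.
    + intros U HU. rewrite dev_form, HF by auto. f_equal. field.
  - intros (G & K & HG & HK & HF). exists G, (K - 2 * G / 3). split; [auto|split].
    + intro E. apply HK. replace K with ((3 * (K - 2 * G / 3) + 2 * G) / 3) by field. rewrite E; field.
    + intros U HU. rewrite HF, dev_form by auto. reflexivity.
Qed.
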